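(* Let $S:\mathbb Z^d\to\mathbb Z^d$ be an automorphism with $\mathrm{spec}(S)=\{1\}$. Then there are integers $n_1\ge n_2\ge\cdots\ge n_J>0$ with $\sum_j n_j=d$ and a basis of $\mathbb Z^d$ with respect to which $S$ is represented by a matrix $A$ whose block decomposition $A=(B_{\alpha,\beta})_{1\le\alpha,\beta\le J}$ of type $(n_1,\dots,n_J)$ satisfies: (a) $B_{\alpha,\alpha}=I$ for $\alpha=1,\dots,J$; (b) $B_{\alpha,\beta}=0$ for $\alpha<\beta$; (c) $B_{\alpha,\alpha-1}$ has rank $n_\alpha$ for $\alpha=2,\dots,J$.
   Context: The block decomposition of type $(n_1,\dots,n_J)$ of a $d\times d$ matrix $A$ consists of the $n_\alpha\times n_\beta$ matrices $B_{\alpha,\beta}$ whose $(i,j)$ entry is the $(n_1+\cdots+n_{\alpha-1}+i,\ n_1+\cdots+n_{\beta-1}+j)$ entry of $A$. $\mathrm{spec}$ denotes the set of eigenvalues. *)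

(* Defs.v *)
From HB Require Import structures.
From mathcomp Require Import all_boot all_order all_algebra all_field.
Set Implicit Arguments. Unset Strict Implicit. Unset Printing Implicit Defensive.
Import Order.TTheory GRing.Theory Num.Theory.
Local Open Scope ring_scope.

(* Entry (i,j) (0-based, natural-number indices) of a d x d matrix, 0 if out of range. *)
Definition mxe (R : pzRingType) (d : nat) (A : 'M[R]_d) (i j : nat) : R :=
  match @insub nat (fun k => k < d)%N 'I_d i, @insub nat (fun k => k < d)%N 'I_d j with
  | Some i', Some j' => A i' j'
  | _, _ => 0
  end.

(* offset n_1 + ... + n_a  (blocks indexed from 0) *)
Definition offs (ns : seq nat) (a : nat) : nat := (\sum_(k < a) nth 0 ns k)%N.

Definition blk (R : pzRingType) (d : nat) (ns : seq nat) (A : 'M[R]_d) (a b : nat)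
  : 'M[R]_(nth 0%N ns a, nth 0%N ns b) :=
  \matrix_(i, j) mxe A (offs ns a + i) (offs ns b + j).

Definition zrank (m n : nat) (B : 'M[int]_(m, n)) : nat :=
  \rank (map_mx (fun z : int => z%:~R : rat) B).

(* Main.v *)
Require Import Defs.
From HB Require Import structures.
From mathcomp Require Import all_boot all_order all_algebra all_field all_fingroup.
Import Order.TTheory GRing.Theory Num.Theory.
Set Implicit Arguments. Unset Strict Implicit. Unset Printing Implicit Defensive.
Local Open Scope ring_scope.

Definition qm m n (A : 'M[int]_(m,n)) : 'M[rat]_(m,n) := map_mx (fun z : int => z%:~R : rat) A.
Lemma qmM m n p (A : 'M[int]_(m,n)) (B : 'M_(n,p)) : qm (A *m B) = qm A *m qm B.
Proof. exact: map_mxM. Qed.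
Lemma qm_unit n (A : 'M[int]_n) : A \in unitmx -> qm A \in unitmx.
Proof. move=> uA. rewrite unitmxE /qm det_map_mx. rewrite unitmxE in uA.
 rewrite unitfE. apply/eqP => h. move: uA. 
 have : (\det A)%:~R == 0 :> rat by rewrite h.
 rewrite intr_eq0 => /eqP ->. by rewrite unitr0.
Qed.
Lemma qm_inj m n (A B : 'M[int]_(m,n)) : qm A = qm B -> A = B.
Proof. move=> h; apply/matrixP=> i j. move/matrixP: h => /(_ i j). rewrite !mxE. by move/eqP; rewrite eqr_int => /eqP. Qed.
Lemma rank_unitl m n (U : 'M[rat]_m) (A : 'M_(m,n)) : U \in unitmx -> \rank (U *m A) = \rank A.
Proof. move=> uU; apply/eqP; rewrite eqn_leq mxrankM_maxr /=.
 rewrite -{1}(mulKmx uU A). exact: mxrankM_maxr. Qed.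
Lemma rank_unitr m n (U : 'M[rat]_n) (A : 'M_(m,n)) : U \in unitmx -> \rank (A *m U) = \rank A.
Proof. by move=> uU; rewrite mxrankMfree // row_free_unit. Qed.
Lemma invmxM' n (A B : 'M[int]_n) : A \in unitmx -> B \in unitmx -> invmx (A *m B) = invmx B *m invmx A.
Proof. move=> uA uB. have uAB : A *m B \in unitmx by rewrite unitmx_mul uA.
 have h : (A *m B) *m (invmx B *m invmx A) = 1%:M.
   by rewrite -mulmxA (mulmxA B) mulmxV // mul1mx mulmxV.
 by rewrite -[LHS]mulmx1 -h mulmxA mulVmx // mul1mx.
Qed.

Definition good d (S : 'M[int]_d) :=
  exists (ns : seq nat) (P : 'M[int]_d),
    [/\ sorted (fun x y : nat => (y <= x)%N) ns,
        all (fun x : nat => (0 < x)%N) ns,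
        sumn ns = d,
        P \in unitmx &
        let A := invmx P *m S *m P in
        [/\ forall a : nat, (a < size ns)%N -> blk ns A a a = 1%:M,
            forall a b : nat, (a < b)%N -> (b < size ns)%N -> blk ns A a b = 0 &
            forall a : nat, (0 < a)%N -> (a < size ns)%N ->
              zrank (blk ns A a a.-1) = nth 0%N ns a]].

Lemma good_conj d (S : 'M[int]_d) Q : Q \in unitmx -> good S -> good (Q *m S *m invmx Q).
Proof.
move=> uQ [ns [P [h1 h2 h3 uP h4]]]; exists ns, (Q *m P).
have -> : invmx (Q *m P) *m (Q *m S *m invmx Q) *m (Q *m P) = invmx P *m S *m P.
  rewrite invmxM' // !mulmxA -(mulmxA _ (invmx Q) Q) mulVmx // mulmx1.
  by rewrite -(mulmxA _ (invmx Q)) mulVmx // mulmx1.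
by split => //; rewrite unitmx_mul uQ.
Qed.

Lemma good_cast d d' (e : d = d') (S : 'M[int]_d) : good S -> good (castmx (e,e) S).
Proof. by case: d' / e; rewrite castmx_id. Qed.

Definition mxe2 m n (A : 'M[int]_(m,n)) (i j : nat) : int :=
  match @insub nat (fun k => k < m)%N 'I_m i, @insub nat (fun k => k < n)%N 'I_n j with
  | Some i', Some j' => A i' j'
  | _, _ => 0
  end.

Lemma mxeE d (A : 'M[int]_d) i j (hi : (i < d)%N) (hj : (j < d)%N) :
  mxe A i j = A (Ordinal hi) (Ordinal hj).
Proof. by rewrite /mxe !insubT. Qed.
Lemma mxe_outl d (A : 'M[int]_d) i j : (d <= i)%N -> mxe A i j = 0.
Proof. by move=> h; rewrite /mxe; case: insubP => [u hu _|//]; rewrite ltnNge h in hu. Qed.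
Lemma mxe_outr d (A : 'M[int]_d) i j : (d <= j)%N -> mxe A i j = 0.
Proof. move=> h; rewrite /mxe; case: (insubP _ j) => [u hu _|]; first by rewrite ltnNge h in hu.
 by move=> _; case: insub. Qed.
Lemma mxe2E m n (A : 'M[int]_(m,n)) i j (hi : (i < m)%N) (hj : (j < n)%N) :
  mxe2 A i j = A (Ordinal hi) (Ordinal hj).
Proof. by rewrite /mxe2 !insubT. Qed.
Lemma mxe2_outr m n (A : 'M[int]_(m,n)) i j : (n <= j)%N -> mxe2 A i j = 0.
Proof. move=> h; rewrite /mxe2; case: (insubP _ j) => [u hu _|]; first by rewrite ltnNge h in hu.
 by move=> _; case: insub. Qed.

Section Block.
Variables (m r : nat) (Aul : 'M[int]_m) (Aur : 'M[int]_(m,r)) (Adl : 'M[int]_(r,m)) (Adr : 'M[int]_r).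
Let B := block_mx Aul Aur Adl Adr.

Lemma mxe_ul i j (hi : (i < m)%N) (hj : (j < m)%N) : mxe B i j = Aul (Ordinal hi) (Ordinal hj).
Proof.
have hi' : (i < m + r)%N by apply: leq_trans hi (leq_addr _ _).
have hj' : (j < m + r)%N by apply: leq_trans hj (leq_addr _ _).
rewrite (mxeE _ hi' hj').
have -> : Ordinal hi' = lshift r (Ordinal hi) by apply: val_inj.
have -> : Ordinal hj' = lshift r (Ordinal hj) by apply: val_inj.
by rewrite block_mxEul.
Qed.

Lemma mxe_ur i j (hi : (i < m)%N) : mxe B i (m + j) = mxe2 Aur i j.
Proof.
have hi' : (i < m + r)%N by apply: leq_trans hi (leq_addr _ _).
case: (ltnP j r) => hj; last by rewrite mxe_outr ?leq_add2l // mxe2_outr.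
have hj' : (m + j < m + r)%N by rewrite ltn_add2l.
rewrite (mxeE _ hi' hj') (mxe2E _ hi hj).
have -> : Ordinal hi' = lshift r (Ordinal hi) by apply: val_inj.
have -> : Ordinal hj' = rshift m (Ordinal hj) by apply: val_inj.
by rewrite block_mxEur.
Qed.

Lemma mxe_dl i j (hj : (j < m)%N) : mxe B (m + i) j = mxe2 Adl i j.
Proof.
have hj' : (j < m + r)%N by apply: leq_trans hj (leq_addr _ _).
case: (ltnP i r) => hi; last first.
  by rewrite mxe_outl ?leq_add2l // /mxe2; case: insubP => [u hu _|//]; rewrite ltnNge hi in hu.
have hi' : (m + i < m + r)%N by rewrite ltn_add2l.
rewrite (mxeE _ hi' hj') (mxe2E _ hi hj).
have -> : Ordinal hi' = rshift m (Ordinal hi) by apply: val_inj.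
have -> : Ordinal hj' = lshift r (Ordinal hj) by apply: val_inj.
by rewrite block_mxEdl.
Qed.

Lemma mxe_dr i j : mxe B (m + i) (m + j) = mxe Adr i j.
Proof.
case: (ltnP i r) => hi; last by rewrite !mxe_outl ?leq_add2l.
case: (ltnP j r) => hj; last by rewrite !mxe_outr ?leq_add2l.
have hi' : (m + i < m + r)%N by rewrite ltn_add2l.
have hj' : (m + j < m + r)%N by rewrite ltn_add2l.
rewrite (mxeE _ hi' hj') (mxeE _ hi hj).
have -> : Ordinal hi' = rshift m (Ordinal hi) by apply: val_inj.
have -> : Ordinal hj' = rshift m (Ordinal hj) by apply: val_inj.
by rewrite block_mxEdr.
Qed.
End Block.

Lemma offs0 ns : offs ns 0 = 0%N.
Proof. by rewrite /offs big_ord0. Qed.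
Lemma offsS m ns a : offs (m :: ns) a.+1 = (m + offs ns a)%N.
Proof. by rewrite /offs big_ord_recl. Qed.

Definition shape d (ns : seq nat) (A : 'M[int]_d) :=
  [/\ forall a : nat, (a < size ns)%N -> blk ns A a a = 1%:M,
      forall a b : nat, (a < b)%N -> (b < size ns)%N -> blk ns A a b = 0 &
      forall a : nat, (0 < a)%N -> (a < size ns)%N ->
              zrank (blk ns A a a.-1) = nth 0%N ns a].

Lemma mxe2_0 m n i j : mxe2 (0 : 'M[int]_(m,n)) i j = 0.
Proof. by rewrite /mxe2; case: insub => // u; case: insub => // v; rewrite mxE. Qed.

Lemma blk_dr m r (X : 'M[int]_(r,m)) (A' : 'M[int]_r) ns' a b :
  blk (m :: ns') (block_mx 1%:M 0 X A') a.+1 b.+1 = blk ns' A' a b.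
Proof. by apply/matrixP => i j; rewrite !mxE !offsS -!addnA mxe_dr. Qed.

Lemma shape_cons m r (X : 'M[int]_(r,m)) (A' : 'M[int]_r) ns' :
  shape ns' A' ->
  ((0 < size ns')%N -> zrank (blk (m::ns') (block_mx 1%:M 0 X A') 1 0) = nth 0%N ns' 0) ->
  shape (m :: ns') (block_mx 1%:M 0 X A').
Proof.
move=> [h1 h2 h3] h4; split.
- case=> [|a] ha.
    apply/matrixP => i j; rewrite !mxE offs0 /=.
    rewrite (mxe_ul _ _ _ _ (ltn_ord i) (ltn_ord j)) !mxE.
    by congr (_ %:R); congr (_ && _).
  by rewrite blk_dr h1.
- case=> [|a] [|b] // hab hb.
    apply/matrixP => i j; rewrite !mxE offs0 offsS /= -addnA.
    by rewrite (mxe_ur _ _ _ _ _ (ltn_ord i)) mxe2_0.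
  by rewrite blk_dr h2.
- case=> [|[|a]] // _ ha; last by rewrite /= blk_dr h3.
Qed.

Lemma exists_block ns j : (j < sumn ns)%N ->
  exists b, [/\ (b < size ns)%N, (offs ns b <= j)%N & (j < offs ns b + nth 0%N ns b)%N].
Proof.
elim: ns j => [|n ns IH] j //= hj.
case: (ltnP j n) => hjn.
  by exists 0%N; rewrite offs0.
have [|b [hb1 hb2 hb3]] := IH (j - n)%N; first by rewrite ltn_subLR.
exists b.+1; rewrite offsS /= ltnS hb1; split => //.
  by rewrite -leq_subRL.
by rewrite -addnA -ltn_subLR.
Qed.

Lemma blkE d ns (A : 'M[int]_d) a b i j (hi : (i < nth 0%N ns a)%N) (hj : (j < nth 0%N ns b)%N) :
  blk ns A a b (Ordinal hi) (Ordinal hj) = mxe A (offs ns a + i) (offs ns b + j).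
Proof. by rewrite mxE. Qed.

Lemma shape_row0 r ns (A : 'M[int]_r) : shape ns A -> sumn ns = r ->
  forall i j, (i < nth 0%N ns 0)%N -> (j < r)%N -> mxe A i j = (i == j)%:R.
Proof.
move=> [h1 h2 _] hs i j hi hj.
have := @exists_block ns j; rewrite hs => /(_ hj) [b [hb1 hb2 hb3]].
have h0 : (0 < size ns)%N by case: (ns) hb1.
have hjb : (j - offs ns b < nth 0%N ns b)%N by rewrite ltn_subLR.
case: b hb1 hb2 hb3 hjb => [|b] hb1 hb2 hb3 hjb.
  move/matrixP: (h1 0%N h0) => /(_ (Ordinal hi) (Ordinal hjb)).
  by rewrite blkE mxE -val_eqE /= offs0 !add0n subn0.
move/matrixP: (h2 0%N b.+1 isT hb1) => /(_ (Ordinal hi) (Ordinal hjb)).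
rewrite blkE mxE offs0 add0n subnKC // => ->.
case: eqP => // eij; move: hb2; rewrite /offs big_ord_recl -eij => h.
by have := leq_trans (leq_addr _ _) h; rewrite leqNgt hi.
Qed.

Definition selT n0 r : 'M[int]_(n0, r) := \matrix_(i, j) ((i : nat) == j)%:R.

Lemma selTmulE n0 r p (M : 'M[int]_(r, p)) (i : 'I_n0) j (hir : (i < r)%N) :
  (selT n0 r *m M) i j = M (Ordinal hir) j.
Proof.
rewrite mxE (bigD1 (Ordinal hir)) //= big1 ?addr0; first by rewrite mxE eqxx mul1r.
move=> k hk; rewrite mxE; case: eqP => [e|]; last by rewrite mul0r.
by case/eqP: hk; apply: val_inj.
Qed.

Lemma rank_selT n0 r : (n0 <= r)%N -> \rank (qm (selT n0 r)) = n0.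
Proof.
move=> hn; apply/eqP; rewrite eqn_leq rank_leq_row /=.
have e : selT n0 r *m (selT n0 r)^T = 1%:M.
  apply/matrixP => i i'.
  rewrite (selTmulE _ _ (leq_trans (ltn_ord i) hn)) !mxE /=.
  by rewrite eq_sym.
have := mxrankM_maxl (qm (selT n0 r)) (qm (selT n0 r)^T).
by rewrite -qmM e /qm map_scalar_mx /= mxrank1.
Qed.

Lemma sumn_head ns : (nth 0%N ns 0 <= sumn ns)%N.
Proof. by case: ns => //= n ns; apply: leq_addr. Qed.

Lemma selT_N0 r ns (A' N' : 'M[int]_r) : shape ns A' -> sumn ns = r -> A' = 1%:M + N' ->
  selT (nth 0%N ns 0) r *m N' = 0.
Proof.
move=> hsh hs eA; set n0 := nth 0%N ns 0.
have hn0 : (n0 <= r)%N by rewrite -hs sumn_head.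
apply/matrixP => i j.
have hir := leq_trans (ltn_ord i) hn0.
rewrite (selTmulE _ _ hir) [RHS]mxE.
have := shape_row0 hsh hs (ltn_ord i) (ltn_ord j).
rewrite (mxeE _ hir (ltn_ord j)) eA !mxE /= => /eqP.
have -> : Ordinal (ltn_ord j) = j by apply: val_inj.
rewrite -val_eqE /= => /eqP h.
by apply: (addrI ((i == j :> nat)%:R)); rewrite addr0.
Qed.

Lemma rank_step m r (X : 'M[int]_(r,m)) (Y : 'M[int]_r) (P' : 'M[int]_r) ns' :
  \rank (qm (row_mx X Y)) = r -> P' \in unitmx -> sumn ns' = r ->
  shape ns' (invmx P' *m (1%:M + Y) *m P') ->
  zrank (blk (m::ns') (block_mx 1%:M 0 (invmx P' *m X) (invmx P' *m (1%:M + Y) *m P')) 1 0)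
   = nth 0%N ns' 0.
Proof.
move=> hrk uP hs hsh.
set A' := invmx P' *m (1%:M + Y) *m P'.
set W := invmx P' *m X.
have hn0 : ((nth 0%N ns' 0) <= r)%N by rewrite -hs sumn_head.
have eblk : blk (m::ns') (block_mx 1%:M 0 W A') 1 0 = selT (nth 0%N ns' 0) r *m W :> 'M_((nth 0%N ns' 0), m).
  apply/matrixP => i j.
  rewrite (selTmulE _ _ (leq_trans (ltn_ord i) hn0)) [LHS]mxE offsS !offs0 addn0 add0n.
  rewrite (mxe_dl _ _ _ _ _ (ltn_ord j)).
  by rewrite (mxe2E _ (leq_trans (ltn_ord i) hn0) (ltn_ord j)); congr (W _ _); apply: val_inj.
rewrite /zrank eblk.
set N' := invmx P' *m Y *m P'.
have eA : A' = 1%:M + N'.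
  by rewrite /A' /N' mulmxDr mulmxDl mulmx1 mulVmx.
have eTN : selT (nth 0%N ns' 0) r *m N' = 0 by apply: (selT_N0 hsh hs eA).
set M := row_mx W N'.
have eM : M = invmx P' *m row_mx X Y *m block_mx 1%:M 0 0 P'.
  by rewrite mul_mx_row mul_row_block !mulmx0 !addr0 !add0r mulmx1.
have rM : row_free (qm M).
  rewrite /row_free eM !qmM rank_unitr; last by apply: qm_unit; rewrite block_diag_mx_unit unitmx1.
  by rewrite rank_unitl ?hrk // qm_unit // unitmx_inv.
have := mxrankMfree (qm (selT (nth 0%N ns' 0) r)) rM.
rewrite -qmM /M mul_mx_row eTN rank_selT // /qm map_row_mx map_mx0 rank_row_mx0.
by move=> h; exact: h.
Qed.

Lemma good_block m r (X : 'M[int]_(r,m)) (Y : 'M[int]_r) :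
  (0 < m)%N -> \rank (qm (row_mx X Y)) = r -> good (1%:M + Y) ->
  good (block_mx 1%:M 0 X (1%:M + Y)).
Proof.
move=> hm hrk [ns' [P' [hso hal hs uP hsh]]].
have hsh' : shape ns' (invmx P' *m (1%:M + Y) *m P') by exact: hsh.
pose P := block_mx (1%:M : 'M[int]_m) 0 0 P'.
have uPP : P \in unitmx by rewrite block_diag_mx_unit unitmx1.
have eA : invmx P *m block_mx 1%:M 0 X (1%:M + Y) *m P =
   block_mx 1%:M 0 (invmx P' *m X) (invmx P' *m (1%:M + Y) *m P').
  rewrite invmx_block_diag // invmx1 !mulmx_block.
  by rewrite !mulmx0 !mul0mx !mulmx1 !addr0 !add0r mul0mx.
have hrs := rank_step (m:=m) hrk uP hs hsh'.
have hsh2 := shape_cons (m:=m) (X:=invmx P' *m X) hsh' (fun _ => hrs).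
exists (m :: ns'), P; split => //.
- case: ns' hso hal hs uP hsh hsh' hrs hsh2 => //= n0 ns0 -> _ _ _ _ _ <- _.
  rewrite andbT; exact: rank_leq_col.
- by rewrite /= hm.
- by rewrite /= hs.
- by rewrite /= eA.
Qed.

Definition mpow d (N : 'M[int]_d) k := iter k (mulmx N) 1%:M.

Lemma mpow_conj d (N Q : 'M[int]_d) k : Q \in unitmx ->
  mpow (invmx Q *m N *m Q) k = invmx Q *m mpow N k *m Q.
Proof.
move=> uQ; elim: k => [|k IH] /=; first by rewrite mulmx1 mulVmx.
rewrite /mpow /= -/(mpow _ _) -/(mpow _ _) IH.
by rewrite !mulmxA -(mulmxA _ Q) mulmxV // mulmx1.
Qed.

Lemma mpow_cast d d' (e : d = d') (N : 'M[int]_d) k :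
  mpow (castmx (e,e) N) k = castmx (e,e) (mpow N k).
Proof. by case: d' / e; rewrite !castmx_id. Qed.

Lemma mpow_block m r (X : 'M[int]_(r,m)) (Y : 'M[int]_r) k :
  mpow (block_mx 0 0 X Y) k.+1 = block_mx 0 0 (mpow Y k *m X) (mpow Y k.+1).
Proof.
elim: k => [|k IH].
  rewrite /mpow /= mulmx1 mul1mx. by rewrite mulmx1.
rewrite /mpow /= -/(mpow _ _) -/(mpow _ _).
rewrite (_ : block_mx 0 0 X Y *m mpow (block_mx 0 0 X Y) k = mpow (block_mx 0 0 X Y) k.+1) // IH mulmx_block.
by rewrite !mul0mx !mulmx0 !addr0 !add0r mulmxA.
Qed.

Lemma rank_castmx (F : fieldType) m n m' n' (e : (m = m') * (n = n')) (A : 'M[F]_(m,n)) :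
  \rank (castmx e A) = \rank A.
Proof. by case: e => e1 e2; case: m' / e1; case: n' / e2; rewrite castmx_id. Qed.

Lemma cast_add1 d d' (e : d = d') (A : 'M[int]_d) :
  castmx (e,e) (1%:M + A) = 1%:M + castmx (e,e) A.
Proof. by case: d' / e; rewrite !castmx_id. Qed.

Lemma invmx_uniq n (A B : 'M[int]_n) : A \in unitmx -> B *m A = 1%:M -> invmx A = B.
Proof. by move=> uA h; rewrite -[LHS]mul1mx -h -mulmxA mulmxV // mulmx1. Qed.

Lemma smith_rows d (N : 'M[int]_d) :
  exists (L : 'M[int]_d) (r0 : nat), [/\ L \in unitmx, (r0 <= d)%N,
     \rank (qm N) = r0 &
     forall (i j : 'I_d), (r0 <= i)%N -> (invmx L *m N *m L) i j = 0].
Proof.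
have [L uL [R uR [s hs eN]]] := int_Smith_normal_form N.
set D := \matrix_(i, j) _ in eN.
pose r0 := minn (find (pred1 (0:int)) s) d.
have hz : forall i : 'I_d, (r0 <= i)%N -> s`_i = 0.
  move=> i; rewrite /r0 geq_min => /orP[] hi; last by rewrite leqNgt ltn_ord in hi.
  case: (ltnP i (size s)) => his; last by rewrite nth_default.
  have hf : (find (pred1 (0:int)) s < size s)%N by apply: leq_ltn_trans hi his.
  have := nth_find 0 (a:=pred1 (0:int)) (s:=s); rewrite has_find => /(_ hf) /= /eqP h0.
  have := sorted_leq_nth (@dvdz_trans) dvdzz 0 hs.
  move=> /(_ (find (pred1 (0:int)) s) i); rewrite !inE => /(_ hf his hi).
  by rewrite h0 dvd0z => /eqP.
have hnz : forall i : 'I_d, (i < r0)%N -> s`_i != 0.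
  move=> i; rewrite /r0 leq_min => /andP[hi _].
  by have := before_find 0 hi => /= /negbT.
pose dv := \row_(i < d) (if (i < r0)%N then s`_i else 1).
have eD : D = diag_mx dv *m pid_mx r0.
  apply/matrixP => i j; rewrite mul_diag_mx !mxE.
  case: (ltnP i r0) => hi; rewrite ?hi ?andbT ?andbF.
    by case: eqP => _; rewrite ?mulr1 ?mulr0.
  by rewrite hz // mul0rn mulr0.
have uDv : qm (diag_mx dv) \in unitmx.
  rewrite unitmxE /qm det_map_mx det_diag unitfE rmorph_prod /=.
  apply/prodf_neq0 => i _; rewrite mxE intr_eq0.
  by case: ifP => hi; [apply: hnz|].
have hr0 : (r0 <= d)%N by apply: geq_minr.
have rN : \rank (qm N) = r0.
  rewrite eN !qmM rank_unitr ?qm_unit // rank_unitl ?qm_unit //.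
  rewrite eD qmM rank_unitl // /qm map_pid_mx rank_pid_mx //.
exists L, r0; split => // i j hi.
have -> : invmx L *m N *m L = D *m (R *m L) by rewrite eN !mulmxA mulVmx // mul1mx.
by rewrite mxE big1 // => k _; rewrite mxE hz // mul0rn mul0r.
Qed.

Lemma reduce d (N : 'M[int]_d) : (\rank (qm N) < d)%N ->
  exists m r (e : d = (m + r)%N) (Q : 'M[int]_d),
   [/\ Q \in unitmx, (0 < m)%N,
       usubmx (castmx (e,e) (invmx Q *m N *m Q)) = 0 &
       \rank (qm (dsubmx (castmx (e,e) (invmx Q *m N *m Q)))) = r].
Proof.
move=> hlt.
have [L [r0 [uL hr0 rN hrow]]] := smith_rows N.
pose sv := perm (@rev_ord_inj d).
pose Q := L *m perm_mx sv.
have uPv : (perm_mx sv : 'M[int]_d) \in unitmx := unitmx_perm _ sv.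
have uQ : Q \in unitmx by rewrite unitmx_mul uL uPv.
have iP : invmx (perm_mx sv : 'M[int]_d) = perm_mx sv^-1.
  by apply: invmx_uniq => //; rewrite -perm_mxM mulVg perm_mx1.
have eQ : invmx Q *m N *m Q = perm_mx sv^-1 *m ((invmx L *m N *m L) *m perm_mx sv).
  by rewrite /Q invmxM' // iP !mulmxA.
have svV : forall x, sv^-1%g x = rev_ord x.
  move=> x; have h1 : sv (rev_ord x) = x by rewrite permE rev_ordK.
  by rewrite -{1}h1 permK.
have hm : (0 < d - r0)%N by rewrite subn_gt0 -rN.
have e : d = ((d - r0) + r0)%N by rewrite subnK.
have hU : usubmx (castmx (e,e) (invmx Q *m N *m Q)) = 0.
  apply/matrixP => i j; rewrite !mxE castmxE eQ -row_permE mxE svV.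
  rewrite mxE big1 // => k _; rewrite hrow ?mul0r //=.
  have hi : (i < d - r0)%N := ltn_ord i.
  by rewrite -{1}(subKn hr0); apply: leq_sub2l.
exists (d - r0)%N, r0, e, Q; split => //.
have h1 := rank_castmx (e,e) (qm (invmx Q *m N *m Q)).
rewrite -map_castmx -[castmx _ _]vsubmxK hU /qm map_col_mx map_mx0 rank_col_0mx in h1.
rewrite /qm h1 -/(qm _).
by rewrite qmM rank_unitr ?qm_unit // qmM rank_unitl ?qm_unit ?unitmx_inv.
Qed.

Lemma qm1 d : qm (1%:M : 'M[int]_d) = 1%:M.
Proof. by rewrite /qm map_scalar_mx /= rmorph1. Qed.

Lemma nil_rank d (N : 'M[int]_d) k : (0 < d)%N -> mpow N k = 0 -> (\rank (qm N) < d)%N.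
Proof.
case: d N => [|d] // N _ hk; rewrite ltn_neqAle rank_leq_row andbT.
apply/negP => /eqP hr.
have uN : qm N \in unitmx by rewrite -row_free_unit /row_free hr.
have : qm (mpow N k) \in unitmx.
  elim: k {hk} => [|k IH]; first by rewrite /mpow /= qm1 unitmx1.
  by rewrite /mpow /= qmM unitmx_mul uN.
by rewrite hk /qm map_mx0 unitmxE det0 unitr0.
Qed.

Lemma good0 (S : 'M[int]_0) : good S.
Proof. by exists [::], 1%:M; split => //; rewrite unitmx1. Qed.

Lemma cast0 d d' (e : d = d') : castmx (e,e) (0 : 'M[int]_d) = 0.
Proof. by case: d' / e; rewrite castmx_id. Qed.

Lemma main_ind n : forall d (S : 'M[int]_d), (d <= n)%N ->
  (exists k, mpow (S - 1%:M) k = 0) -> good S.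
Proof.
elim: n => [|n IH] [|d'] S hd [k hk] //; try exact: good0.
set N := S - 1%:M in hk.
have hN1 : mpow N k.+1 = 0 by rewrite /mpow /= -/(mpow _ _) hk mulmx0.
have [m [r [e [Q [uQ hm hU hR]]]]] := reduce (@nil_rank d'.+1 N k isT hk).
set N0 := castmx (e,e) (invmx Q *m N *m Q) in hU hR.
have eN0 : N0 = block_mx 0 0 (dlsubmx N0) (drsubmx N0).
  rewrite -[LHS]submxK; congr block_mx; apply/matrixP => i j; rewrite !mxE;
  move/matrixP: hU => /(_ i) h; [have := h (lshift r j) | have := h (rshift m j)];
  by rewrite !mxE.
set X := dlsubmx N0 in eN0; set Y := drsubmx N0 in eN0.
have hrk : \rank (qm (row_mx X Y)) = r by rewrite /X /Y hsubmxK.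
have hY : mpow Y k.+1 = 0.
  have := mpow_block X Y k; rewrite -eN0 /N0 mpow_cast mpow_conj // hN1.
  rewrite mulmx0 mul0mx => h.
  have := congr1 drsubmx h; rewrite block_mxKdr cast0 => <-.
  by apply/matrixP => i j; rewrite !mxE.
have hr : (r <= n)%N.
  have hr' : (r < d'.+1)%N by rewrite e -{1}[r]add0n ltn_add2r.
  by rewrite ltnS in hr' hd; exact: leq_trans hr' hd.
have gY : good (1%:M + Y).
  apply: IH => //; exists k.+1; by rewrite addrAC subrr add0r.
have gB := good_block hm hrk gY.
have eB : castmx (e,e) (invmx Q *m S *m Q) = block_mx 1%:M 0 X (1%:M + Y).
  have -> : invmx Q *m S *m Q = 1%:M + invmx Q *m N *m Q.
    by rewrite /N mulmxBr mulmxBl mulmx1 mulVmx // addrC subrK.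
  rewrite cast_add1 -/N0 eN0 (scalar_mx_block m r) add_block_mx.
  by rewrite !addr0 add0r.
have := good_cast (esym e) gB; rewrite -eB castmxK => g1.
have := good_conj uQ g1.
by rewrite !mulmxA mulmxV // mul1mx mulmxK.
Qed.

Lemma nilp_spec d (S : 'M[int]_d) :
  (forall a : algC, eigenvalue (map_mx (fun z : int => z%:~R : algC) S) a <-> a = 1) ->
  exists k, mpow (S - 1%:M) k = 0.
Proof.
case: d S => [|n] S hspec.
  by exists 0%N; apply/matrixP => [[]].
set Sc := map_mx (fun z : int => z%:~R : algC) S in hspec.
have [rs hrs] := closed_field_poly_normal (char_poly Sc).
have l1 : lead_coef (char_poly Sc) = 1 by apply/monicP/char_poly_monic.
rewrite l1 scale1r in hrs.
have hall : forall z, z \in rs -> z = 1.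
  move=> z hz; apply/hspec; rewrite eigenvalue_root_char hrs.
  by rewrite root_prod_XsubC.
have CH := Cayley_Hamilton Sc.
rewrite hrs rmorph_prod /= in CH.
have : \prod_(z <- rs) (Sc - 1%:M) = 0.
  rewrite -CH; apply: eq_big_seq => z hz.
  by rewrite rmorphB /= horner_mx_X horner_mx_C (hall z hz).
rewrite big_const_seq => hit.
exists (count predT rs).
have em : forall k, map_mx (fun z : int => z%:~R : algC) (mpow (S - 1%:M) k) =
             iter k (GRing.mul (Sc - 1%:M)) 1.
  elim=> [|k IH] /=; first by rewrite /mpow /= map_scalar_mx /= rmorph1.
  rewrite /mpow /= -/(mpow _ _) map_mxM IH mulmxE; congr (_ * _).
  by rewrite map_mxB map_scalar_mx /= rmorph1.
have := em (count predT rs); rewrite hit => h.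
apply/matrixP => i j; move/matrixP: h => /(_ i j); rewrite !mxE.
by move/eqP; rewrite intr_eq0 => /eqP.
Qed.

Unset Implicit Arguments.

Theorem mainTheorem11 (d : nat) (S : 'M[int]_d)
  (hS : S \in unitmx)
  (hspec : forall a : algC, eigenvalue (map_mx (fun z : int => z%:~R : algC) S) a <-> a = 1) :
  exists (ns : seq nat) (P : 'M[int]_d),
    [/\ sorted (fun x y : nat => (y <= x)%N) ns,
        all (fun x : nat => (0 < x)%N) ns,
        sumn ns = d,
        P \in unitmx &
        let A := invmx P *m S *m P in
        [/\ forall a : nat, (a < size ns)%N -> blk ns A a a = 1%:M,
            forall a b : nat, (a < b)%N -> (b < size ns)%N -> blk ns A a b = 0 &
            forall a : nat, (0 < a)%N -> (a < size ns)%N ->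
              zrank (blk ns A a a.-1) = nth 0%N ns a]].
Proof. exact: (main_ind (leqnn d) (nilp_spec hspec)). Qed.
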